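(* For every $k\ge1$ and every $g\in B_k$, we have $g^2\in B_k'$.
   Context: Let $C_2=\{e,\sigma\}$ with $\sigma=(1,2)$. Define $B_1=C_2$ and $B_k=B_{k-1}\wr C_2$ for $k>1$ (the iterated permutational wreath product of $k$ copies of $C_2$, isomorphic to a Sylow $2$-subgroup of $S_{2^k}$), with elements written as wreath recursions $(g_1,g_2)\pi$, $g_1,g_2\in B_{k-1}$, $\pi\in C_2$, and multiplication $(g_1,g_2)\pi\cdot(h_1,h_2)\rho=(g_1h_{\pi(1)},g_2h_{\pi(2)})\pi\rho$. *)

(* Defs.v *)
From mathcomp Require Import all_boot all_fingroup all_solvable.
Set Implicit Arguments. Unset Strict Implicit. Unset Printing Implicit Defensive.

(* B_k realized as the group of automorphisms of the binary rooted tree of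
   depth k, acting on the leaves = k.-tuple bool (binary words of length k).
   A permutation p of the leaves is in B_(k+1) iff it is a wreath recursion
   (g_false, g_true) pi: there is pi (pi = true means the swap sigma) and
   for each first letter b an element q_b of B_k with
   p (b :: w) = (pi xor b) :: q_b w. *)
Fixpoint inB (k : nat) : {perm k.-tuple bool} -> bool :=
  match k return {perm k.-tuple bool} -> bool with
  | 0 => fun _ => true
  | k'.+1 => fun p =>
      [exists pi : bool, forall b : bool, exists q : {perm k'.-tuple bool},
         inB q && [forall w : k'.-tuple bool,
           p [tuple of b :: w] == [tuple of (pi (+) b) :: q w]]]
  end.

Definition B (k : nat) : {set {perm k.-tuple bool}} := [set p | inB p].

(* Main.v *)
Require Import Defs.
From mathcomp Require Import all_boot all_fingroup all_solvable.
Set Implicit Arguments. Unset Strict Implicit. Unset Printing Implicit Defensive.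
Local Open Scope group_scope.

Lemma sq_der (gT : finGroupType) (G : {group gT}) (S : {set gT}) :
  S \subset G -> (forall s, s \in S -> s * s = 1) -> G \subset <<S>> ->
  forall g, g \in G -> g ^+ 2 \in G^`(1).
Proof.
move=> sSG invS sGS.
have KP : group_set [set x in G | x ^+ 2 \in G^`(1)].
  apply/group_setP; split; first by rewrite inE group1 expg1n group1.
  move=> x y; rewrite !inE => /andP[Gx Dx] /andP[Gy Dy].
  rewrite groupM //=.
  have -> : (x * y) ^+ 2 = x ^+ 2 * [~ x, y^-1] * y ^+ 2.
    by rewrite /commg /conjg !expgS !expg0 !mulg1 invgK !mulgA mulgKV mulgK.
  apply: groupM => //; apply: groupM => //; exact: (mem_commg Gx (groupVr Gy)).
move=> g Gg.
have : g \in Group KP.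
  apply: (subsetP _ g (subsetP sGS g Gg)); rewrite gen_subG.
  apply/subsetP=> s Ss; rewrite inE (subsetP sSG) //=.
  by rewrite expgS expg1 invS // group1.
by rewrite inE => /andP[].
Qed.

Section Mk.
Variable k : nat.
Variables (pi : bool) (q : bool -> {perm k.-tuple bool}).

Definition mkf (t : k.+1.-tuple bool) : k.+1.-tuple bool :=
  [tuple of (pi (+) thead t) :: q (thead t) (behead_tuple t)].

Lemma mkf_inj : injective mkf.
Proof.
move=> t1 t2 /(congr1 val) /= [] h e.
move/(congr1 (addb pi)): h; rewrite !addKb => h.
rewrite h in e; move/val_inj/perm_inj/(congr1 val): e => /= e.
rewrite (tuple_eta t1) (tuple_eta t2); apply: val_inj => /=.
by rewrite h e.
Qed.

Definition mk : {perm k.+1.-tuple bool} := perm mkf_inj.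

Lemma mkE (b : bool) (w : k.-tuple bool) : mk [tuple of b :: w] = [tuple of (pi (+) b) :: q b w].
Proof.
rewrite permE /mkf.
have -> : behead_tuple [tuple of b :: w] = w by apply: val_inj.
by apply: val_inj. Qed.
End Mk.

Lemma mk_eq k pi q1 q2 : (forall b, q1 b = q2 b) -> @mk k pi q1 = mk pi q2.
Proof. by move=> e; apply/permP=> t; rewrite (tuple_eta t) !mkE e. Qed.

Lemma mkM k pi q rho r :
  @mk k pi q * mk rho r = mk (pi (+) rho) (fun b => q b * r (pi (+) b)).
Proof.
apply/permP=> t; rewrite (tuple_eta t) permM !mkE permM.
by apply: val_inj; rewrite /= addbA (addbC rho).
Qed.

Lemma mk1 k : @mk k false (fun _ => 1) = 1.
Proof. by apply/permP=> t; rewrite [in LHS](tuple_eta t) mkE !perm1 [in RHS](tuple_eta t). Qed.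

Lemma mk_inB k pi q : (forall b, q b \in B k) -> @mk k pi q \in B k.+1.
Proof.
move=> Bq; rewrite inE /=; apply/existsP; exists pi; apply/forallP=> b.
apply/existsP; exists (q b); have := Bq b; rewrite inE => -> /=.
by apply/forallP=> w; rewrite mkE.
Qed.

Lemma inB_mk k g : g \in B k.+1 ->
  exists pi, exists2 q, (forall b, q b \in B k) & g = @mk k pi q.
Proof.
rewrite inE /= => /existsP[pi /forallP H].
have /existsP[qf /andP[Bf /forallP Ef]] := H false.
have /existsP[qt /andP[Bt /forallP Et]] := H true.
exists pi, (fun b => if b then qt else qf).
  by case; rewrite inE.
apply/permP=> t; rewrite (tuple_eta t) mkE.
set w := behead_tuple t; case: (thead t).
  by apply/eqP; rewrite -[[tuple of _ :: w]]/[tuple of true :: w] Et.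
by apply/eqP; rewrite Ef.
Qed.

Lemma B_group k : group_set (B k).
Proof.
elim: k => [|k IH]; apply/group_setP; split.
- by rewrite inE.
- by move=> x y; rewrite !inE.
- by rewrite -mk1; apply: mk_inB => _; rewrite (group1 (Group IH)).
move=> x y /inB_mk[pi [q Bq ->]] /inB_mk[rho [r Br ->]].
rewrite mkM; apply: mk_inB => b.
exact: (groupM (G := Group IH) (Bq b) (Br _)).
Qed.

Definition S k := [set s in B k | s * s == 1].

Definition L k (c : bool) (x : {perm k.-tuple bool}) :=
  mk false (fun b => if b == c then x else 1).

Lemma LM k c x y : L c (x * y) = @L k c x * L c y.
Proof. by rewrite /L mkM; apply: mk_eq => b /=; case: (b == c); rewrite ?mulg1. Qed.

Lemma L1 k c : @L k c 1 = 1.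
Proof. by rewrite /L -(mk1 k); apply: mk_eq => b; case: (b == c). Qed.

Lemma L_gen k c x : x \in <<S k>> -> @L k c x \in <<S k.+1>>.
Proof.
case/gen_prodgP=> n [f Sf ->].
rewrite (big_morph (L c) (LM c) (L1 k c)).
apply: group_prod => i _; apply: mem_gen.
have /setIdP[Bf /eqP ff] := Sf i.
rewrite inE -LM ff L1 eqxx andbT.
apply: mk_inB => b; case: (b == c) => //.
exact: (group1 (Group (B_group k))).
Qed.

Lemma B_gen k : B k \subset <<S k>>.
Proof.
elim: k => [|k IH]; apply/subsetP => g.
  have -> : g = 1 by apply/permP => t; rewrite perm1 (tuple0 t) (tuple0 (g _)).
  by rewrite group1.
case/inB_mk=> pi [q Bq ->].
have -> : mk pi q = L false (q false) * L true (q true) * mk pi (fun _ => 1).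
  by rewrite /L !mkM /=; apply: mk_eq => b; case: b; rewrite /= ?mul1g ?mulg1.
rewrite !groupM ?L_gen ?(subsetP IH) //.
case: pi; last by rewrite mk1 group1.
apply: mem_gen; rewrite inE mkM /= mk_inB /=.
  by apply/eqP; rewrite -(mk1 k); apply: mk_eq => _; rewrite mulg1.
by move=> _; exact: (group1 (Group (B_group k))).
Qed.

Theorem mainTheorem15 (k : nat) (hk : 1 <= k) (g : {perm k.-tuple bool}) :
  g \in B k -> (g ^+ 2)%g \in ((B k)^`(1))%g.
Proof.
move=> Bg.
apply: (sq_der (G := Group (B_group k)) (S := S k)) => //.
- by apply/subsetP => s; rewrite inE => /andP[].
- by move=> s; rewrite inE => /andP[_ /eqP].
- exact: B_gen.
Qed.
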